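(* Let $\mathcal{Q}\subseteq\mathbb{R}^n$ and consider the robotic system $\mathbf{D}(\mathbf{q})\ddot{\mathbf{q}}+\mathbf{C}(\mathbf{q},\dot{\mathbf{q}})\dot{\mathbf{q}}+\mathbf{G}(\mathbf{q})=\mathbf{B}\mathbf{u}$, $\mathbf{u}\in\mathbb{R}^m$. Let $h_0:\mathcal{Q}\to\mathbb{R}$ and $\mathbf{k}_0:\mathcal{Q}\to\mathbb{R}^n$ be continuously differentiable, $\mu>0$, and $$h(\mathbf{q},\dot{\mathbf{q}})=h_0(\mathbf{q})-\frac{1}{2\mu}(\dot{\mathbf{q}}-\mathbf{k}_0(\mathbf{q}))^\top\mathbf{D}(\mathbf{q})(\dot{\mathbf{q}}-\mathbf{k}_0(\mathbf{q})),\qquad \mathcal{C}=\{(\mathbf{q},\dot{\mathbf{q}})\in T\mathcal{Q}:h(\mathbf{q},\dot{\mathbf{q}})\ge0\}.$$ If $h$ is an energy-based control barrier function for the robotic system on $\mathcal{C}$ (with extended class $\mathcal{K}_\infty$ function $\alpha$), then any locally Lipschitz controller $\mathbf{k}:T\mathcal{Q}\to\mathbb{R}^m$ satisfying, for all $(\mathbf{q},\dot{\mathbf{q}})\in T\mathcal{Q}$, $$\tfrac{1}{\mu}(\dot{\mathbf{q}}-\mathbf{k}_0(\mathbf{q}))^\top\Big[\mathbf{D}(\mathbf{q})\tfrac{\partial\mathbf{k}_0}{\partial\mathbf{q}}(\mathbf{q})\dot{\mathbf{q}}+\mathbf{C}(\mathbf{q},\dot{\mathbf{q}})\mathbf{k}_0(\mathbf{q})+\mathbf{G}(\mathbf{q})-\mathbf{B}\mathbf{k}(\mathbf{q},\dot{\mathbf{q}})\Big]+\nabla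 h_0(\mathbf{q})\cdot\dot{\mathbf{q}}\ge-\alpha(h(\mathbf{q},\dot{\mathbf{q}}))$$ renders $\mathcal{C}$ forward invariant for the closed-loop system obtained with $\mathbf{u}=\mathbf{k}(\mathbf{q},\dot{\mathbf{q}})$.
   Context: $\mathbf{D}(\mathbf{q})$ is the positive definite (continuously differentiable) inertia matrix, $\mathbf{C}$ the Coriolis matrix, $\mathbf{G}$ the gravity term, $\mathbf{B}\in\mathbb{R}^{n\times m}$ the actuation matrix; the inertia and Coriolis matrices satisfy the skew-symmetry property $\mathbf{v}^\top(\dot{\mathbf{D}}(\mathbf{q},\dot{\mathbf{q}})-2\mathbf{C}(\mathbf{q},\dot{\mathbf{q}}))\mathbf{v}=0$ for all $(\mathbf{q},\dot{\mathbf{q}})$ and $\mathbf{v}\in\mathbb{R}^n$. An extended class $\mathcal{K}_\infty$ function is a continuous strictly increasing $\alpha:\mathbb{R}\to\mathbb{R}$ with $\alpha(0)=0$ and $\alpha(s)\to\pm\infty$ as $s\to\pm\infty$. $h$ is an energy-based CBF on $\mathcal{C}$ if there is such an $\alpha$ with, for all $(\mathbf{q},\dot{\mathbf{q}})$, $\sup_{\mathbf{u}\in\mathbb{R}^m}\{\tfrac{1}{\mu}(\dot{\mathbf{q}}-\mathbf{k}_0)^\top[\mathbf{D}\tfrac{\partial\mathbf{k}_0}{\partial\mathbf{q}}\dot{\mathbf{q}}+\mathbf{C}\mathbf{k}_0+\mathbf{G}-\mathbf{B}\mathbf{u}]+\nabla h_0\cdot\dot{\mathbf{q}}\}>-\alpha(h)$.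 A set is forward invariant if every closed-loop trajectory starting in it remains in it on its whole maximal interval of existence. *)

(* Defs.v *)
From HB Require Import structures.
From mathcomp Require Import all_boot all_order all_algebra.
From mathcomp Require Import all_classical all_reals all_analysis.
Set Implicit Arguments. Unset Strict Implicit. Unset Printing Implicit Defensive.
Import Order.TTheory GRing.Theory Num.Theory.
Import numFieldNormedType.Exports.
Local Open Scope classical_set_scope.
Local Open Scope ring_scope.

Section Defs.
Variables (R : realType) (n m : nat).

Definition qform (u : 'cV[R]_n) (M : 'M[R]_n) (v : 'cV[R]_n) : R :=
  (u^T *m M *m v) ord0 ord0.

Definition dotv (u v : 'cV[R]_n) : R := (u^T *m v) ord0 ord0.

Definition C1_on {W : normedModType R} (Q : set 'cV[R]_n) (f : 'cV[R]_n -> W) :=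
  (forall q, Q q -> differentiable f q) /\
  (forall w : 'cV[R]_n, {within Q, continuous (fun q => 'd f q w)}).

Definition robot_assumptions (Q : set 'cV[R]_n) (D : 'cV[R]_n -> 'M[R]_n)
    (C : 'cV[R]_n -> 'cV[R]_n -> 'M[R]_n) : Prop :=
  [/\
      (forall q, Q q -> (D q)^T = D q),
      (forall q v, Q q -> v != 0 -> 0 < qform v (D q) v),
      C1_on Q D &
      (* skew-symmetry: v^T (Ddot(q,qd) - 2 C(q,qd)) v = 0, Ddot(q,qd) = dD(q)[qd] *)
      (forall q qd v, Q q -> qform v ('d D q qd - 2%:R *: C q qd) v = 0)].

Definition ext_classKinf (alpha : R -> R) : Prop :=
  [/\ continuous alpha,
      (forall x y, x < y -> alpha x < alpha y),
      alpha 0 = 0,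
      (forall M, exists N, forall x, N < x -> M < alpha x) &
      (forall M, exists N, forall x, x < N -> alpha x < M)].

Definition hE (D : 'cV[R]_n -> 'M[R]_n) (h0 : 'cV[R]_n -> R)
    (k0 : 'cV[R]_n -> 'cV[R]_n) (mu : R) (q qd : 'cV[R]_n) : R :=
  h0 q - (2 * mu)^-1 * qform (qd - k0 q) (D q) (qd - k0 q).

(* the safe set C = {(q,qd) in TQ | h(q,qd) >= 0}, TQ = Q x R^n *)
Definition safe_set (Q : set 'cV[R]_n) (D : 'cV[R]_n -> 'M[R]_n) (h0 : 'cV[R]_n -> R)
    (k0 : 'cV[R]_n -> 'cV[R]_n) (mu : R) : set ('cV[R]_n * 'cV[R]_n) :=
  [set x | Q x.1 /\ 0 <= hE D h0 k0 mu x.1 x.2].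

Definition hdot_expr (D : 'cV[R]_n -> 'M[R]_n) (C : 'cV[R]_n -> 'cV[R]_n -> 'M[R]_n)
    (G : 'cV[R]_n -> 'cV[R]_n) (B : 'M[R]_(n, m)) (h0 : 'cV[R]_n -> R)
    (k0 : 'cV[R]_n -> 'cV[R]_n) (mu : R) (q qd : 'cV[R]_n) (u : 'cV[R]_m) : R :=
  mu^-1 * dotv (qd - k0 q)
    (D q *m ('d k0 q qd) + C q qd *m k0 q + G q - B *m u)
  + 'd h0 q qd.

Definition energy_CBF (Q : set 'cV[R]_n) (D : 'cV[R]_n -> 'M[R]_n)
    (C : 'cV[R]_n -> 'cV[R]_n -> 'M[R]_n) (G : 'cV[R]_n -> 'cV[R]_n)
    (B : 'M[R]_(n, m)) (h0 : 'cV[R]_n -> R) (k0 : 'cV[R]_n -> 'cV[R]_n) (mu : R)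
    (alpha : R -> R) : Prop :=
  ext_classKinf alpha /\
  forall q qd, Q q ->
    ((- alpha (hE D h0 k0 mu q qd))%:E <
      ereal_sup [set (hdot_expr D C G B h0 k0 mu q qd u)%:E | u in [set: 'cV[R]_m]])%E.

Definition locally_lipschitz_on (Q : set 'cV[R]_n)
    (k : 'cV[R]_n -> 'cV[R]_n -> 'cV[R]_m) : Prop :=
  forall q qd, Q q -> exists eps : R, exists L : R, 0 < eps /\
    forall q1 qd1 q2 qd2, Q q1 -> Q q2 ->
      `|q1 - q| < eps -> `|qd1 - qd| < eps ->
      `|q2 - q| < eps -> `|qd2 - qd| < eps ->
      `|k q1 qd1 - k q2 qd2| <= L * (`|q1 - q2| + `|qd1 - qd2|).

Definition cl_solution (Q : set 'cV[R]_n) (D : 'cV[R]_n -> 'M[R]_n)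
    (C : 'cV[R]_n -> 'cV[R]_n -> 'M[R]_n) (G : 'cV[R]_n -> 'cV[R]_n)
    (B : 'M[R]_(n, m)) (k : 'cV[R]_n -> 'cV[R]_n -> 'cV[R]_m)
    (T : R) (q qd : R -> 'cV[R]_n) : Prop :=
  [/\ (forall t, 0 <= t < T -> Q (q t)),
      {within [set t | 0 <= t < T], continuous q},
      {within [set t | 0 <= t < T], continuous qd} &
      (forall t, 0 < t < T ->
         [/\ is_derive t 1 q (qd t), derivable qd t 1 &
             D (q t) *m 'D_1 qd t + C (q t) (qd t) *m qd t + G (q t)
               = B *m k (q t) (qd t)])].

(* forward invariance: every closed-loop trajectory starting in S stays in S on
   its interval of existence (any [0,T), hence the maximal one). *)
Definition forward_invariant (Q : set 'cV[R]_n) (D : 'cV[R]_n -> 'M[R]_n)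
    (C : 'cV[R]_n -> 'cV[R]_n -> 'M[R]_n) (G : 'cV[R]_n -> 'cV[R]_n)
    (B : 'M[R]_(n, m)) (k : 'cV[R]_n -> 'cV[R]_n -> 'cV[R]_m)
    (S : set ('cV[R]_n * 'cV[R]_n)) : Prop :=
  forall (T : R) (q qd : R -> 'cV[R]_n), 0 < T ->
    cl_solution Q D C G B k T q qd -> S (q 0, qd 0) ->
    forall t, 0 <= t < T -> S (q t, qd t).

End Defs.

(* Main.v *)
Require Import Defs.
From HB Require Import structures.
From mathcomp Require Import all_boot all_order all_algebra.
From mathcomp Require Import all_classical all_reals all_analysis.
From mathcomp Require Import ring lra.
Import Order.TTheory GRing.Theory Num.Theory.
Import numFieldNormedType.Exports.
Local Open Scope classical_set_scope.
Local Open Scope ring_scope.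
Set Implicit Arguments. Unset Strict Implicit. Unset Printing Implicit Defensive.

Section Aux.
Variable R : realType.

Lemma der_entry a b (M : R -> 'M[R]_(a,b)) t i j : derivable M t 1 ->
  derivable (fun s => M s i j) t 1 /\ 'D_1 (fun s => M s i j) t = 'D_1 M t i j.
Proof.
move=> dM; split; first exact: (derivable_mxP M t 1).1 dM i j.
by rewrite (derive_mx dM) mxE.
Qed.

Lemma der_mul a b c (M : R -> 'M[R]_(a,b)) (N : R -> 'M[R]_(b,c)) t :
  derivable M t 1 -> derivable N t 1 ->
  derivable (fun s => M s *m N s) t 1 /\
  'D_1 (fun s => M s *m N s) t = 'D_1 M t *m N t + M t *m 'D_1 N t.
Proof.
move=> dM dN.
have dent i j : derivable (fun s => (M s *m N s) i j) t 1 /\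
   'D_1 (fun s => (M s *m N s) i j) t = ('D_1 M t *m N t + M t *m 'D_1 N t) i j.
  have -> : (fun s => (M s *m N s) i j) =
     \sum_(k < b) ((fun s => M s i k) * (fun s => N s k j)).
    by apply/funext => s; rewrite mxE fct_sumE.
  have dk k : derivable ((fun s => M s i k) * (fun s => N s k j)) t 1.
    by apply: derivableM; [exact: (der_entry _ _ dM).1|exact: (der_entry _ _ dN).1].
  split; first exact: derivable_sum.
  rewrite derive_sum // !mxE -big_split /=; apply: eq_bigr => k _.
  rewrite deriveM; [|exact: (der_entry _ _ dM).1|exact: (der_entry _ _ dN).1].
  rewrite (der_entry _ _ dM).2 (der_entry _ _ dN).2 /=.
  by rewrite /GRing.scale /= addrC mulrC [X in _ + X]mulrC.
have dMN : derivable (fun s => M s *m N s) t 1.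
  by apply/derivable_mxP => i j; exact: (dent i j).1.
split => //; rewrite (derive_mx dMN); apply/matrixP => i j.
by rewrite mxE (dent i j).2.
Qed.

Lemma der_tr a b (M : R -> 'M[R]_(a,b)) t :
  derivable M t 1 ->
  derivable (fun s => (M s)^T) t 1 /\ 'D_1 (fun s => (M s)^T) t = ('D_1 M t)^T.
Proof.
move=> dM.
have dent i j : derivable (fun s => (M s)^T i j) t 1 /\
    'D_1 (fun s => (M s)^T i j) t = ('D_1 M t)^T i j.
  have -> : (fun s => (M s)^T i j) = (fun s => M s j i).
    by apply/funext => s; rewrite mxE.
  by rewrite mxE; exact: der_entry.
have dMT : derivable (fun s => (M s)^T) t 1.
  by apply/derivable_mxP => i j; exact: (dent i j).1.
split => //; rewrite (derive_mx dMT); apply/matrixP => i j.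
by rewrite mxE (dent i j).2.
Qed.

Lemma der_comp (W : normedModType R) n (f : 'cV[R]_n -> W) (q : R -> 'cV[R]_n) t v :
  differentiable f (q t) -> is_derive t 1 q v ->
  derivable (f \o q) t 1 /\ 'D_1 (f \o q) t = 'd f (q t) v.
Proof.
move=> df dq.
have dq' : differentiable q t by apply/derivable1_diffP; exact: ex_derive.
have dfq : differentiable (f \o q) t by exact: differentiable_comp.
split; first exact/derivable1_diffP.
rewrite deriveE // diff_comp //=.
have -> : 'd q t 1 = v by rewrite -deriveE //; exact: derive_val.
by [].
Qed.


Lemma qformE n (u v : 'cV[R]_n) M :
  qform u M v = \sum_j (\sum_i u i ord0 * M i j) * v j ord0.
Proof.
rewrite /qform !mxE; apply: eq_bigr => j _; rewrite !mxE; congr (_ * _).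
by apply: eq_bigr => i _; rewrite !mxE.
Qed.

Lemma ent_cvg (T : Type) (F : set_system T) (FF : Filter F) a b
  (X : T -> 'M[R]_(a,b)) (X0 : 'M[R]_(a,b)) i j :
  X @ F --> X0 -> (fun s => X s i j) @ F --> X0 i j.
Proof. move=> cX; exact: (@cvg_comp _ _ _ X (fun Y : 'M[R]_(a,b) => Y i j) _ _ _ cX (@coord_continuous R a b i j X0)). Qed.

Lemma qform_cvg n (T : Type) (F : set_system T) (FF : Filter F)
  (u : T -> 'cV[R]_n) (M : T -> 'M[R]_n) u0 M0 :
  u @ F --> u0 -> M @ F --> M0 ->
  (fun s => qform (u s) (M s) (u s)) @ F --> qform u0 M0 u0.
Proof.
move=> cu cM.
rewrite qformE; under eq_cvg do rewrite qformE.
apply: cvg_big => //; first exact: add_continuous.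
move=> j _; apply: cvgM; last exact: ent_cvg.
apply: cvg_big => //; first exact: add_continuous.
by move=> i _; apply: cvgM; exact: ent_cvg.
Qed.


Lemma dotvD n (E x y : 'cV[R]_n) : dotv E (x + y) = dotv E x + dotv E y.
Proof. by rewrite /dotv mulmxDr mxE. Qed.
Lemma dotvN n (E x : 'cV[R]_n) : dotv E (- x) = - dotv E x.
Proof. by rewrite /dotv mulmxN mxE. Qed.

Lemma alg n m (E qd qdd k0v dk0 G : 'cV[R]_n) (Dt Dt' Cm : 'M[R]_n)
  (B : 'M[R]_(n,m)) (u : 'cV[R]_m) (a mu : R) :
  mu != 0 -> Dt^T = Dt -> qform E (Dt' - 2%:R *: Cm) E = 0 -> E = qd - k0v ->
  Dt *m qdd + Cm *m qd + G = B *m u ->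
  a - (2 * mu)^-1 *: ((((qdd - dk0)^T *m Dt + E^T *m Dt') *m E
        + (E^T *m Dt) *m (qdd - dk0)) ord0 ord0)
  = mu^-1 * dotv E (Dt *m dk0 + Cm *m k0v + G - B *m u) + a.
Proof.
move=> mu0 sym skew hE ode.
have tr00 (X : 'M[R]_1) : X ord0 ord0 = X^T ord0 ord0 by rewrite mxE.
have h1 : ((qdd - dk0)^T *m Dt *m E) ord0 ord0 = dotv E (Dt *m (qdd - dk0)).
  by rewrite tr00 !trmx_mul trmxK sym /dotv mulmxA.
have h2 : (E^T *m Dt' *m E) ord0 ord0 = 2 * dotv E (Cm *m E).
  move: skew; rewrite /qform /dotv mulmxA mulmxBr mulmxBl -scalemxAr -scalemxAl !mxE.
  lra.
have h3 : (E^T *m Dt *m (qdd - dk0)) ord0 ord0 = dotv E (Dt *m (qdd - dk0)).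
  by rewrite /dotv mulmxA.
have h4 : Dt *m (qdd - dk0) = B *m u - Cm *m qd - G - Dt *m dk0.
  by rewrite mulmxBr -ode; apply/matrixP => i j; rewrite !mxE; lra.
have eD (X1 X2 : 'M[R]_1) : (X1 + X2) ord0 ord0 = X1 ord0 ord0 + X2 ord0 ord0 by rewrite mxE.
rewrite mulmxDl !eD h1 h2 h3 h4.
have h5 : Cm *m E = Cm *m qd - Cm *m k0v by rewrite hE mulmxBr.
rewrite h5.
rewrite !dotvD !dotvN.
rewrite /GRing.scale /=.
field.
by [].
Qed.


Lemma H_deriv n m (Q : set 'cV[R]_n) D C G (B : 'M[R]_(n,m)) h0 k0 mu k
  (q qd : R -> 'cV[R]_n) t :
  robot_assumptions Q D C -> C1_on Q h0 -> C1_on Q k0 -> mu != 0 ->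
  Q (q t) -> is_derive t 1 q (qd t) -> derivable qd t 1 ->
  D (q t) *m 'D_1 qd t + C (q t) (qd t) *m qd t + G (q t) = B *m k (q t) (qd t) ->
  derivable (fun s => hE D h0 k0 mu (q s) (qd s)) t 1 /\
  'D_1 (fun s => hE D h0 k0 mu (q s) (qd s)) t
    = hdot_expr D C G B h0 k0 mu (q t) (qd t) (k (q t) (qd t)).
Proof.
move=> [Dsym Dpos [Ddiff _] skew] [h0diff _] [k0diff _] mu0 Qt dq dqd ode.
have [dk0 Dk0] := der_comp (k0diff _ Qt) dq.
have [dDq DDq] := der_comp (Ddiff _ Qt) dq.
have [dh0 Dh0] := der_comp (h0diff _ Qt) dq.
pose e := qd - (k0 \o q).
have de : derivable e t 1 by apply: derivableB.
have De : 'D_1 e t = 'D_1 qd t - 'd k0 (q t) (qd t) by rewrite deriveB // Dk0.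
have [d1 D1] := der_tr de.
have [d2 D2] := der_mul d1 dDq.
have [d3 D3] := der_mul d2 de.
have [d4 D4] := der_entry ord0 ord0 d3.
have -> : (fun s => hE D h0 k0 mu (q s) (qd s)) =
   (h0 \o q) - (2 * mu)^-1 *: (fun s => ((fun s => (e s)^T *m (D \o q) s) s *m e s) ord0 ord0).
  by apply/funext => s.
split.
  by apply: derivableB => //; apply: derivableZ.
rewrite deriveB //; last exact: derivableZ.
rewrite deriveZ // D4 D3 D2 D1 De Dh0 DDq /=.
rewrite /hdot_expr.
apply: alg => //.
- exact: Dsym.
- exact: skew.
Qed.

End Aux.

Unset Implicit Arguments.

Theorem theorem9 (R : realType) (n m : nat) (Q : set 'cV[R]_n)
  (D : 'cV[R]_n -> 'M[R]_n) (C : 'cV[R]_n -> 'cV[R]_n -> 'M[R]_n)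
  (G : 'cV[R]_n -> 'cV[R]_n) (B : 'M[R]_(n, m))
  (h0 : 'cV[R]_n -> R) (k0 : 'cV[R]_n -> 'cV[R]_n) (mu : R) (alpha : R -> R)
  (k : 'cV[R]_n -> 'cV[R]_n -> 'cV[R]_m) :
  robot_assumptions Q D C ->
  C1_on Q h0 -> C1_on Q k0 -> 0 < mu ->
  energy_CBF Q D C G B h0 k0 mu alpha ->
  locally_lipschitz_on Q k ->
  (forall q qd, Q q ->
     - alpha (hE D h0 k0 mu q qd) <= hdot_expr D C G B h0 k0 mu q qd (k q qd)) ->
  forward_invariant Q D C G B k (safe_set Q D h0 k0 mu).
Proof.
move=> rob h0C k0C mu_gt0 [[_ amono a0 _ _] _] _ Hk T q qd T0 sol [_ S0] t /andP[t0 tT].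
have [Qq cq cqd dyn] := sol.
have mu0 : mu != 0 by rewrite gt_eqF.
split; first by apply: Qq; rewrite t0 tT.
pose H := fun s => hE D h0 k0 mu (q s) (qd s).
have HD s : 0 < s < T -> derivable H s 1 /\
    'D_1 H s = hdot_expr D C G B h0 k0 mu (q s) (qd s) (k (q s) (qd s)).
  move=> /andP[s0 sT]; have [dq dqd ode] := dyn s ltac:(by rewrite s0 sT).
  apply: (H_deriv rob h0C k0C mu0) => //.
  by apply: Qq; rewrite ltW.
have Hpos s : 0 < s < T -> H s < 0 -> 0 < 'D_1 H s.
  move=> /[dup] sin /andP[s0 sT] Hs.
  rewrite (HD s sin).2.
  apply: lt_le_trans (Hk _ _ _); last by apply: Qq; rewrite ltW.
  by rewrite oppr_gt0 -a0; apply: amono.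
have Hcont : {within [set s | 0 <= s < T], continuous H}.
  apply/subspace_continuousP => x Ax.
  have cq' := (subspace_continuousP _ _).1 cq x Ax.
  have cqd' := (subspace_continuousP _ _).1 cqd x Ax.
  have Qx : Q (q x) by exact: Qq.
  have ch0 := cvg_comp _ _ cq' (differentiable_continuous (h0C.1 _ Qx)).
  have ck0 := cvg_comp _ _ cq' (differentiable_continuous (k0C.1 _ Qx)).
  have [_ _ [Ddiff _] _] := rob.
  have cD := cvg_comp _ _ cq' (differentiable_continuous (Ddiff _ Qx)).
  have ce : (fun s => qd s - k0 (q s)) @ within [set s | 0 <= s < T] (nbhs x)
      --> qd x - k0 (q x).
    by apply: cvgB; [exact: cqd' | exact: ck0].
  apply: cvgB; first exact: ch0.
  apply: cvgMl_tmp; exact: qform_cvg.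
rewrite /= -/(H t) leNgt; apply/negP => Ht.
have H0 : 0 <= H 0 by exact: S0.
have tpos : 0 < t.
  rewrite lt_neqAle t0 andbT; apply/eqP => t0E.
  by move: Ht; rewrite -t0E ltNge H0.
pose S := [set s | 0 <= s <= t /\ 0 <= H s].
have S0' : S 0 by split => //; rewrite lexx ltW.
have hsS : has_sup S.
  split; first by exists 0.
  by exists t => y [/andP[_ yt] _].
pose s := sup S.
have s0 : 0 <= s by exact: sup_upper_bound.
have st : s <= t by apply: ge_sup; [exists 0|move=> y [/andP[_ yt] _]].
have Hs : 0 <= H s.
  have [s0E|sne0] := eqVneq s 0; first by rewrite s0E.
  have spos : 0 < s by rewrite lt_neqAle eq_sym sne0 s0.
  rewrite leNgt; apply/negP => Hsneg.
  have [dH _] := HD s ltac:(by rewrite spos (le_lt_trans st tT)).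
  have cH : {for s, continuous H}.
    by apply: differentiable_continuous; apply/derivable1_diffP.
  have [e /= e0 He] := (nbhs_ballP _ _).1 (cvgr_lt _ cH _ Hsneg).
  have [y Sy ly] := sup_adherent e0 hsS.
  have ys : y <= s by exact: sup_upper_bound.
  have : H y < 0.
    apply: He; rewrite /ball /= ger0_norm ?subr_ge0 //.
    by rewrite ltrBlDr addrC -ltrBlDr.
  by rewrite ltNge Sy.2.
have slt : s < t.
  rewrite lt_neqAle st andbT; apply/eqP => sE.
  by move: Hs; rewrite sE leNgt Ht.
have mvd : forall x, x \in `]s, t[ -> is_derive x 1 H ('D_1 H x).
  move=> x; rewrite in_itv /= => /andP[sx xt].
  have xin : 0 < x < T by rewrite (le_lt_trans s0 sx) (lt_trans xt tT).
  exact: derivableP (HD x xin).1.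
have mvc : {within `[s, t], continuous H}.
  apply: continuous_subspaceW Hcont => x /=; rewrite in_itv /= => /andP[sx xt].
  by rewrite (le_trans s0 sx) (le_lt_trans xt tT).
have [c cin Hmvt] := MVT slt mvd mvc.
move: cin; rewrite in_itv /= => /andP[sc ct].
have Hc : H c < 0.
  rewrite ltNge; apply/negP => Hc.
  have : c <= s by apply: sup_upper_bound => //; split => //; rewrite (ltW ct) (le_trans s0 (ltW sc)).
  by rewrite leNgt sc.
have dpos := Hpos c ltac:(by rewrite (le_lt_trans s0 sc) (lt_trans ct tT)) Hc.
have : 0 < 'D_1 H c * (t - s) by rewrite mulr_gt0 // subr_gt0.
rewrite -Hmvt; lra.
Qed.
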